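(* Let $P:\mathscr P\to\mathscr T$, $Q:\mathscr Q\to\mathscr T$ and $A:\mathscr T\to\mathscr U$ be morphisms of $\mathscr J$-theories. (1) If $P$ commutes with $Q$, then $A\circ P$ commutes with $A\circ Q$. (2) If $A$ is a subtheory embedding (i.e. its hom-components are monomorphisms in $\mathscr V$) and $A\circ P$ commutes with $A\circ Q$, then $P$ commutes with $Q$.
   Context: $(\mathscr V,\otimes,I)$ is a closed symmetric monoidal category, $\underline{\mathscr V}$ the associated $\mathscr V$-category; everything is $\mathscr V$-enriched. A system of arities is a full sub-$\mathscr V$-category $\mathscr J\hookrightarrow\underline{\mathscr V}$ containing $I$ and closed under $\otimes$. A cotensor $[V,C]$ is an object with counit $V\to\mathscr C([V,C],C)$ inducing $\mathscr C(-,[V,C])\cong\underline{\mathscr V}(V,\mathscr C(-,C))$. A $\mathscr J$-theory is a $\mathscr V$-category $\mathscr T$ with $\mathrm{ob}\,\mathscr T=\mathrm{ob}\,\mathscr J$ and an identity-on-objects $\tau:\mathscr J^{\mathrm{op}}\to\mathscr T$ preserving cotensors by objects of $\mathscr J$; a morphism $(\mathscr T,\tau)\to(\mathscr U,\upsilon)$ is a $\mathscr V$-functor $A$ with $A\tau=\upsilon$. In a theory $(\mathscr T,\tau)$, $J\otimes K$ and $K\otimes J$ are cotensors of $K$ by $J$ with counits $J\xrightarrow{\mathrm{Coev}}\underline{\mathscr V}(K,J\otimes K)=\mathscr J^{\mathrm{op}}(J\otimes K,K)\xrightarrow{\tau}\mathscr T(J\otimes K,K)$ and $J\xrightarrow{\mathrm{Coev}'}\underline{\mathscr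 V}(K,K\otimes J)\xrightarrow{\tau}\mathscr T(K\otimes J,K)$ ($\mathrm{Coev}'$ = coevaluation composed with symmetry), inducing $\mathscr V$-functors $[J,-]_\ell$ ($K\mapsto J\otimes K$) and $[J,-]_r$ ($K\mapsto K\otimes J$). Kronecker products $\mathsf k,\tilde{\mathsf k}:\mathscr T(J,J')\otimes\mathscr T(K,K')\to\mathscr T(J\otimes K,J'\otimes K')$ are composition after $[K,-]_r\otimes[J',-]_\ell$ (into $\mathscr T(J\otimes K,J'\otimes K)\otimes\mathscr T(J'\otimes K,J'\otimes K')$), resp. after $[K',-]_r\otimes[J,-]_\ell$ (into $\mathscr T(J\otimes K',J'\otimes K')\otimes\mathscr T(J\otimes K,J\otimes K')$). Morphisms of theories $P:\mathscr P\to\mathscr T$, $Q:\mathscr Q\to\mathscr T$ commute if $\mathsf k\cdot(P_{JJ'}\otimes Q_{KK'})=\tilde{\mathsf k}\cdot(P_{JJ'}\otimes Q_{KK'})$ in $\mathscr T$ for all $J,J',K,K'\in\mathscr J$. *)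

(* Defs.v *)
Record SMCC := {
  ob : Type;
  hom : ob -> ob -> Type;
  comp : forall {a b c : ob}, hom b c -> hom a b -> hom a c;
  idm : forall a : ob, hom a a;
  comp_assoc : forall a b c d (f : hom a b) (g : hom b c) (h : hom c d),
      comp h (comp g f) = comp (comp h g) f;
  comp_id_l : forall a b (f : hom a b), comp (idm b) f = f;
  comp_id_r : forall a b (f : hom a b), comp f (idm a) = f;

  tens : ob -> ob -> ob;
  tensm : forall {a b c d : ob}, hom a b -> hom c d -> hom (tens a c) (tens b d);
  tensm_id : forall a b, tensm (idm a) (idm b) = idm (tens a b);
  tensm_comp : forall a b c a' b' c' (f : hom a b) (f' : hom b c)
      (g : hom a' b') (g' : hom b' c'),
      tensm (comp f' f) (comp g' g) = comp (tensm f' g') (tensm f g);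
  unit : ob;

  assoc : forall a b c, hom (tens (tens a b) c) (tens a (tens b c));
  assoc_inv : forall a b c, hom (tens a (tens b c)) (tens (tens a b) c);
  assoc_iso1 : forall a b c, comp (assoc a b c) (assoc_inv a b c) = idm _;
  assoc_iso2 : forall a b c, comp (assoc_inv a b c) (assoc a b c) = idm _;
  assoc_nat : forall a b c a' b' c' (f : hom a a') (g : hom b b') (h : hom c c'),
      comp (assoc a' b' c') (tensm (tensm f g) h)
      = comp (tensm f (tensm g h)) (assoc a b c);

  lunit : forall a, hom (tens unit a) a;
  lunit_inv : forall a, hom a (tens unit a);
  lunit_iso1 : forall a, comp (lunit a) (lunit_inv a) = idm _;
  lunit_iso2 : forall a, comp (lunit_inv a) (lunit a) = idm _;
  lunit_nat : forall a b (f : hom a b),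
      comp (lunit b) (tensm (idm unit) f) = comp f (lunit a);

  runit : forall a, hom (tens a unit) a;
  runit_inv : forall a, hom a (tens a unit);
  runit_iso1 : forall a, comp (runit a) (runit_inv a) = idm _;
  runit_iso2 : forall a, comp (runit_inv a) (runit a) = idm _;
  runit_nat : forall a b (f : hom a b),
      comp (runit b) (tensm f (idm unit)) = comp f (runit a);

  sym : forall a b, hom (tens a b) (tens b a);
  sym_inv : forall a b, comp (sym b a) (sym a b) = idm _;
  sym_nat : forall a b a' b' (f : hom a a') (g : hom b b'),
      comp (sym a' b') (tensm f g) = comp (tensm g f) (sym a b);

  pentagon : forall a b c d,
      comp (assoc a b (tens c d)) (assoc (tens a b) c d)
      = comp (tensm (idm a) (assoc b c d))
             (comp (assoc a (tens b c) d) (tensm (assoc a b c) (idm d)));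
  triangle : forall a b,
      comp (tensm (idm a) (lunit b)) (assoc a unit b)
      = tensm (runit a) (idm b);
  hexagon : forall a b c,
      comp (assoc b c a) (comp (sym a (tens b c)) (assoc a b c))
      = comp (tensm (idm b) (sym a c))
             (comp (assoc b a c) (tensm (sym a b) (idm c)));

  (* closed structure: (- (x) a) -| ihom a - *)
  ihom : ob -> ob -> ob;
  ev : forall a b, hom (tens (ihom a b) a) b;
  curry : forall {a b c}, hom (tens c a) b -> hom c (ihom a b);
  ev_curry : forall a b c (f : hom (tens c a) b),
      comp (ev a b) (tensm (curry f) (idm a)) = f;
  curry_ev : forall a b c (g : hom c (ihom a b)),
      curry (comp (ev a b) (tensm g (idm a))) = g
}.

Arguments hom : clear implicits.
Arguments comp {V a b c} _ _ : rename.
Arguments idm {V} a : rename.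
Arguments tens {V} _ _ : rename.
Arguments tensm {V a b c d} _ _ : rename.
Arguments unit {V} : rename.
Arguments assoc {V} a b c : rename.
Arguments lunit {V} a : rename.
Arguments runit {V} a : rename.
Arguments sym {V} a b : rename.
Arguments ihom {V} _ _ : rename.
Arguments ev {V} a b : rename.
Arguments curry {V a b c} _ : rename.

Section Enriched.
Variable V : SMCC.

Definition is_iso {a b : ob V} (f : hom V a b) : Prop :=
  exists g : hom V b a, comp g f = idm a /\ comp f g = idm b.

Definition is_mono {a b : ob V} (f : hom V a b) : Prop :=
  forall z (g h : hom V z a), comp f g = comp f h -> g = h.

Definition compV (a b c : ob V) : hom V (tens (ihom b c) (ihom a b)) (ihom a c) :=
  curry (comp (ev b c) (comp (tensm (idm _) (ev a b)) (assoc _ _ _))).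
Definition idV (a : ob V) : hom V unit (ihom a a) := curry (lunit a).

Record VCatData := {
  cob : Type;
  chom : cob -> cob -> ob V;
  ccomp : forall a b c, hom V (tens (chom b c) (chom a b)) (chom a c);
  cid : forall a, hom V unit (chom a a)
}.
Arguments chom : clear implicits.
Arguments ccomp : clear implicits.
Arguments cid : clear implicits.

Definition is_VCat (C : VCatData) : Prop :=
  (forall a b c d,
     comp (ccomp C a b d) (tensm (ccomp C b c d) (idm _))
     = comp (ccomp C a c d) (comp (tensm (idm _) (ccomp C a b c)) (assoc _ _ _)))
  /\ (forall a b, comp (ccomp C a b b) (tensm (cid C b) (idm _)) = lunit _)
  /\ (forall a b, comp (ccomp C a a b) (tensm (idm _) (cid C a)) = runit _).

Definition is_VFunctor (C D : VCatData) (fo : cob C -> cob D)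
    (fh : forall a b, hom V (chom C a b) (chom D (fo a) (fo b))) : Prop :=
  (forall a b c, comp (fh a c) (ccomp C a b c)
                 = comp (ccomp D (fo a) (fo b) (fo c)) (tensm (fh b c) (fh a b)))
  /\ (forall a, comp (fh a a) (cid C a) = cid D (fo a)).

(* Cotensors: the map C(y,x) -> [v, C(y,c)] induced by e : v -> C(x,c). *)
Definition cotmap (C : VCatData) (v : ob V) (y x c : cob C)
    (e : hom V v (chom C x c)) : hom V (chom C y x) (ihom v (chom C y c)) :=
  curry (comp (ccomp C y x c) (comp (sym _ _) (tensm (idm _) e))).

Definition is_cotensor (C : VCatData) (v : ob V) (x c : cob C)
    (e : hom V v (chom C x c)) : Prop :=
  forall y, is_iso (cotmap C v y x c e).

(* Systems of arities: full sub-V-categories of underline V containing I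
   and closed under tensor, given by their object predicate. *)
Record Arities := {
  Jp : ob V -> Prop;
  Jp_unit : Jp unit;
  Jp_tens : forall a b, Jp a -> Jp b -> Jp (tens a b)
}.

Variable J : Arities.

Definition Jobj : Type := { x : ob V | Jp J x }.
Definition jv (j : Jobj) : ob V := proj1_sig j.
Definition jt (j k : Jobj) : Jobj :=
  exist _ (tens (jv j) (jv k)) (Jp_tens J _ _ (proj2_sig j) (proj2_sig k)).

Definition Jop : VCatData :=
  {| cob := Jobj;
     chom := fun a b => ihom (jv b) (jv a);
     ccomp := fun a b c => comp (compV (jv c) (jv b) (jv a)) (sym _ _);
     cid := fun a => idV (jv a) |}.

Record Theory := {
  thom : Jobj -> Jobj -> ob V;
  tcomp : forall a b c, hom V (tens (thom b c) (thom a b)) (thom a c);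
  tid : forall a, hom V unit (thom a a);
  tau : forall a b, hom V (ihom (jv b) (jv a)) (thom a b);
  th_VCat : is_VCat (Build_VCatData Jobj thom tcomp tid);
  tau_VFunctor : is_VFunctor Jop (Build_VCatData Jobj thom tcomp tid) (fun x => x) tau;
  tau_cotensors : forall (v x c : Jobj) (e : hom V (jv v) (chom Jop x c)),
      is_cotensor Jop (jv v) x c e ->
      is_cotensor (Build_VCatData Jobj thom tcomp tid) (jv v) x c (comp (tau x c) e)
}.
Arguments thom : clear implicits.
Arguments tcomp : clear implicits.
Arguments tid : clear implicits.
Arguments tau : clear implicits.

Definition tdata (T : Theory) : VCatData :=
  Build_VCatData Jobj (thom T) (tcomp T) (tid T).

Record TheoryMor (T U : Theory) := {
  tm : forall a b, hom V (thom T a b) (thom U a b);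
  tm_VFunctor : is_VFunctor (tdata T) (tdata U) (fun x => x) tm;
  tm_tau : forall a b, comp (tm a b) (tau T a b) = tau U a b
}.
Arguments tm {T U} _ _ _.

Definition subtheory_embedding {T U : Theory} (A : TheoryMor T U) : Prop :=
  forall a b, is_mono (tm A a b).

(* Coevaluations and the counits exhibiting J(x)K and K(x)J as cotensors of K by J. *)
Definition Coev (j k : Jobj) : hom V (jv j) (ihom (jv k) (tens (jv j) (jv k))) :=
  curry (idm _).
Definition Coev' (j k : Jobj) : hom V (jv j) (ihom (jv k) (tens (jv k) (jv j))) :=
  curry (sym (jv j) (jv k)).

Definition lcounit (T : Theory) (j k : Jobj) : hom V (jv j) (thom T (jt j k) k) :=
  comp (tau T (jt j k) k) (Coev j k).
Definition rcounit (T : Theory) (j k : Jobj) : hom V (jv j) (thom T (jt k j) k) :=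
  comp (tau T (jt k j) k) (Coev' j k).

(* L j is the hom-part of [j,-]_l (K |-> j(x)K), characterized by the
   universal property of the cotensor j(x)K'. *)
Definition is_lfun (T : Theory)
    (L : forall j k k', hom V (thom T k k') (thom T (jt j k) (jt j k'))) : Prop :=
  forall j k k',
    comp (cotmap (tdata T) (jv j) (jt j k) (jt j k') k' (lcounit T j k')) (L j k k')
    = curry (comp (tcomp T (jt j k) k k') (tensm (idm _) (lcounit T j k))).

(* R j is the hom-part of [j,-]_r (K |-> K(x)j). *)
Definition is_rfun (T : Theory)
    (R : forall j k k', hom V (thom T k k') (thom T (jt k j) (jt k' j))) : Prop :=
  forall j k k',
    comp (cotmap (tdata T) (jv j) (jt k j) (jt k' j) k' (rcounit T j k')) (R j k k')
    = curry (comp (tcomp T (jt k j) k k') (tensm (idm _) (rcounit T j k))).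

Definition kron (T : Theory)
    (L : forall j k k', hom V (thom T k k') (thom T (jt j k) (jt j k')))
    (R : forall j k k', hom V (thom T k k') (thom T (jt k j) (jt k' j)))
    (j j' k k' : Jobj) :
    hom V (tens (thom T j j') (thom T k k')) (thom T (jt j k) (jt j' k')) :=
  comp (tcomp T (jt j k) (jt j' k) (jt j' k'))
       (comp (sym _ _) (tensm (R k j j') (L j' k k'))).

Definition kront (T : Theory)
    (L : forall j k k', hom V (thom T k k') (thom T (jt j k) (jt j k')))
    (R : forall j k k', hom V (thom T k k') (thom T (jt k j) (jt k' j)))
    (j j' k k' : Jobj) :
    hom V (tens (thom T j j') (thom T k k')) (thom T (jt j k) (jt j' k')) :=
  comp (tcomp T (jt j k) (jt j k') (jt j' k'))
       (tensm (R k' j j') (L j k k')).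

Definition commute_fam {T : Theory}
    {Ph : Jobj -> Jobj -> ob V} (P : forall a b, hom V (Ph a b) (thom T a b))
    {Qh : Jobj -> Jobj -> ob V} (Q : forall a b, hom V (Qh a b) (thom T a b)) : Prop :=
  forall L R, is_lfun T L -> is_rfun T R ->
  forall j j' k k',
    comp (kron T L R j j' k k') (tensm (P j j') (Q k k'))
    = comp (kront T L R j j' k k') (tensm (P j j') (Q k k')).

Definition commute {TP TQ T : Theory} (P : TheoryMor TP T) (Q : TheoryMor TQ T) : Prop :=
  commute_fam (tm P) (tm Q).

Definition mor_comp_fam {S T U : Theory} (A : TheoryMor T U) (P : TheoryMor S T) :
    forall a b, hom V (thom S a b) (thom U a b) :=
  fun a b => comp (tm A a b) (tm P a b).

End Enriched.
Arguments tm {V J T U} _ _ _.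
Arguments is_iso {V a b} _.
Arguments is_mono {V a b} _.
Arguments subtheory_embedding {V J T U} _.
Arguments commute_fam {V J T Ph} _ {Qh} _.
Arguments commute {V J TP TQ T} _ _.
Arguments mor_comp_fam {V J S T U} _ _ _ _.

(* Main.v *)
Require Import Defs.
From Stdlib Require Import ClassicalEpsilon.

Lemma cA (V : SMCC) a b c d (f : hom V a b) (g : hom V b c) (h : hom V c d) :
  comp h (comp g f) = comp (comp h g) f.
Proof. apply comp_assoc. Qed.

Lemma tC (V : SMCC) a b c a' b' c' (f : hom V a b) (f' : hom V b c)
      (g : hom V a' b') (g' : hom V b' c') :
  comp (tensm f' g') (tensm f g) = tensm (comp f' f) (comp g' g).
Proof. symmetry; apply tensm_comp. Qed.

Lemma curry_ext (V : SMCC) a b c (g h : hom V c (ihom a b)) :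
  comp (ev a b) (tensm g (idm a)) = comp (ev a b) (tensm h (idm a)) -> g = h.
Proof. intro E. rewrite <- (curry_ev V a b c g), <- (curry_ev V a b c h), E. reflexivity. Qed.

Lemma curry_nat (V : SMCC) a b c d (f : hom V (tens c a) b) (h : hom V d c) :
  comp (curry f) h = curry (comp f (tensm h (idm a))).
Proof.
  apply curry_ext. rewrite ev_curry.
  rewrite <- (comp_id_l V _ _ (idm a)) at 1.
  rewrite tensm_comp, cA, ev_curry. reflexivity.
Qed.

Lemma curry_post (V : SMCC) a b b' c (f : hom V (tens c a) b) (h : hom V b b') :
  comp (curry (comp h (ev a b))) (curry f) = curry (comp h f).
Proof.
  rewrite curry_nat. rewrite <- cA, ev_curry. reflexivity.
Qed.

Lemma idm_curry (V : SMCC) (a b : ob V) : idm (ihom a b) = curry (ev a b).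
Proof.
  rewrite <- (curry_ev V a b _ (idm _)). rewrite tensm_id, comp_id_r. reflexivity.
Qed.

Lemma sym_sym (V : SMCC) a b c (f : hom V (tens a b) c) :
  comp (comp f (sym b a)) (sym a b) = f.
Proof. rewrite <- cA, sym_inv, comp_id_r. reflexivity. Qed.

Lemma assoc_inv_nat (V : SMCC) a b c a' b' c' (f : hom V a a') (g : hom V b b') (h : hom V c c') :
  comp (assoc_inv V a' b' c') (tensm f (tensm g h))
  = comp (tensm (tensm f g) h) (assoc_inv V a b c).
Proof.
  rewrite <- (comp_id_r V _ _ (comp (assoc_inv V a' b' c') _)).
  rewrite <- (assoc_iso1 V a b c).
  rewrite cA.
  replace (comp (comp (assoc_inv V a' b' c') (tensm f (tensm g h))) (assoc a b c))
    with (comp (assoc_inv V a' b' c') (comp (tensm f (tensm g h)) (assoc a b c)))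
    by apply cA.
  rewrite <- assoc_nat. rewrite cA, assoc_iso2, comp_id_l. reflexivity.
Qed.

Lemma F_key (V : SMCC) (j k m y : ob V) (c : hom V (tens j k) m) :
  comp (ev k y) (tensm (comp (comp (compV V k m y) (sym _ _))
         (comp (sym _ _) (tensm (idm (ihom m y)) (curry c)))) (idm k))
  = comp (ev m y) (comp (tensm (idm _) c) (assoc _ _ _)).
Proof.
  rewrite cA, sym_sym.
  rewrite <- (comp_id_l V _ _ (idm k)), tensm_comp, cA.
  unfold compV. rewrite ev_curry.
  rewrite <- !cA. f_equal. f_equal. rewrite assoc_nat. rewrite cA, tC.
  rewrite comp_id_l, ev_curry. reflexivity.
Qed.

Lemma tsl (V : SMCC) a b c d (f : hom V a b) (g : hom V c d) :
  comp (tensm (idm b) g) (tensm f (idm c)) = comp (tensm f (idm d)) (tensm (idm a) g).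
Proof. rewrite !tC, !comp_id_l, !comp_id_r. reflexivity. Qed.

Lemma ctx2 (V : SMCC) a b b' c z (f : hom V a b) (g : hom V b c) (f' : hom V a b') (g' : hom V b' c) (X : hom V z a) :
  comp g f = comp g' f' -> comp g (comp f X) = comp g' (comp f' X).
Proof. intro E. rewrite !cA, E. reflexivity. Qed.

Lemma ctx1 (V : SMCC) a b c z (f : hom V a b) (g : hom V b c) (h : hom V a c) (X : hom V z a) :
  comp g f = h -> comp g (comp f X) = comp h X.
Proof. intro E. rewrite cA, E. reflexivity. Qed.

Lemma tC1 (V : SMCC) a b c d (f : hom V a b) (f' : hom V b c) :
  tensm (comp f' f) (idm d) = comp (tensm f' (idm d)) (tensm f (idm d)).
Proof. rewrite tC, comp_id_l. reflexivity. Qed.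

Lemma cot_iso (V : SMCC) (j k m y : ob V) (c : hom V (tens j k) m) (d : hom V m (tens j k))
  (cd : comp c d = idm _) (dc : comp d c = idm _) :
  is_iso (curry (comp (comp (compV V k m y) (sym _ _))
         (comp (sym _ _) (tensm (idm (ihom m y)) (curry c))))).
Proof.
  set (F := comp (comp (compV V k m y) (sym _ _))
         (comp (sym _ _) (tensm (idm (ihom m y)) (curry c)))).
  assert (HF : comp (ev k y) (tensm F (idm k))
     = comp (ev m y) (comp (tensm (idm _) c) (assoc _ _ _))) by apply F_key.
  exists (curry (comp (ev k y) (comp (tensm (ev j (ihom k y)) (idm k))
            (comp (assoc_inv V _ j k) (tensm (idm _) d))))).
  split.
  - rewrite curry_nat. transitivity (curry (ev m y)); [f_equal | symmetry; apply idm_curry].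
    rewrite <- !cA. rewrite tsl. rewrite <- (tensm_id V j k).
    rewrite (ctx2 _ _ _ _ _ _ _ _ _ _ _ (assoc_inv_nat _ _ _ _ _ _ _ _ _ _)).
    rewrite (ctx1 _ _ _ _ _ _ _ _ _ (tC _ _ _ _ _ _ _ _ _ _ _)).
    rewrite comp_id_l, ev_curry. rewrite cA, HF.
    rewrite <- !cA. rewrite (ctx1 _ _ _ _ _ _ _ _ _ (assoc_iso1 _ _ _ _)).
    rewrite comp_id_l, tC, comp_id_l, cd, tensm_id, comp_id_r. reflexivity.
  - rewrite curry_nat. transitivity (curry (ev j (ihom k y))); [f_equal | symmetry; apply idm_curry].
    apply curry_ext.
    rewrite tC1, cA, HF.
    rewrite <- !cA.
    rewrite assoc_nat, tensm_id.
    rewrite (ctx2 _ _ _ _ _ _ _ _ _ _ _ (tsl _ _ _ _ _ _ _)).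
    rewrite (ctx1 _ _ _ _ _ _ _ _ _ (ev_curry _ _ _ _ _)).
    rewrite <- !cA.
    rewrite (ctx1 _ _ _ _ _ _ _ _ _ (tC _ _ _ _ _ _ _ _ _ _ _)).
    rewrite comp_id_l, dc, tensm_id, comp_id_l, assoc_iso2, comp_id_r. reflexivity.
Qed.

Lemma Afun (V : SMCC) (J : Arities V) (T U : Theory V J) (A : TheoryMor V J T U) a b c :
  comp (tm A a c) (tcomp V J T a b c) = comp (tcomp V J U a b c) (tensm (tm A b c) (tm A a b)).
Proof. destruct (tm_VFunctor _ _ _ _ A) as [H _]. apply H. Qed.

Lemma cot_nat (V : SMCC) (J : Arities V) (T U : Theory V J) (A : TheoryMor V J T U)
  (v : ob V) (y x c : Jobj V J) (e : hom V v (thom V J T x c)) :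
  comp (cotmap V (tdata V J U) v y x c (comp (tm A x c) e)) (tm A y x)
  = comp (curry (comp (tm A y c) (ev _ _))) (cotmap V (tdata V J T) v y x c e).
Proof.
  unfold cotmap. rewrite curry_nat, curry_post. f_equal. cbn [ccomp chom tdata].
  rewrite <- !cA. rewrite (ctx1 _ _ _ _ _ _ _ _ _ (Afun _ _ _ _ _ _ _ _)).
  rewrite <- !cA. f_equal. rewrite tC. rewrite cA, <- sym_nat, <- cA. f_equal.
  rewrite <- cA. f_equal. rewrite tC, !comp_id_l, !comp_id_r. reflexivity.
Qed.

Lemma iso_mono (V : SMCC) a b (f : hom V a b) : is_iso f -> is_mono f.
Proof.
  intros [g [H1 H2]] z x y E.
  rewrite <- (comp_id_l V _ _ x), <- (comp_id_l V _ _ y), <- H1, <- !cA, E. reflexivity.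
Qed.

Lemma fun_nat (V : SMCC) (J : Arities V) (T U : Theory V J) (A : TheoryMor V J T U)
  (v : ob V) (y x c d : Jobj V J) (eT1 : hom V v (thom V J T x c)) (eT2 : hom V v (thom V J T y d))
  (fT : hom V (thom V J T d c) (thom V J T y x)) (fU : hom V (thom V J U d c) (thom V J U y x)) :
  is_iso (cotmap V (tdata V J U) v y x c (comp (tm A x c) eT1)) ->
  comp (cotmap V (tdata V J T) v y x c eT1) fT
    = curry (comp (tcomp V J T y d c) (tensm (idm _) eT2)) ->
  comp (cotmap V (tdata V J U) v y x c (comp (tm A x c) eT1)) fU
    = curry (comp (tcomp V J U y d c) (tensm (idm _) (comp (tm A y d) eT2))) ->
  comp (tm A y x) fT = comp fU (tm A d c).
Proof.
  intros Hi HT HU. apply (iso_mono _ _ _ _ Hi).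
  rewrite (cA _ _ _ _ _ fT), cot_nat.
  rewrite <- (cA _ _ _ _ _ fT).
  cbn [chom tdata] in *.
  rewrite HT.
  rewrite (cA _ _ _ _ _ (tm A d c)), HU.
  rewrite curry_post, curry_nat. f_equal.
  rewrite cA, Afun, <- !cA. f_equal. rewrite !tC, !comp_id_l, !comp_id_r. reflexivity.
Qed.

Lemma coev_cot (V : SMCC) (J : Arities V) j k :
  is_cotensor V (Jop V J) (jv V J j) (jt V J j k) k (Coev V J j k).
Proof.
  intro y. apply (cot_iso V (jv V J j) (jv V J k) _ (jv V J y) (idm _) (idm _));
  apply comp_id_l.
Qed.

Lemma coev'_cot (V : SMCC) (J : Arities V) j k :
  is_cotensor V (Jop V J) (jv V J j) (jt V J k j) k (Coev' V J j k).
Proof.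
  intro y. apply (cot_iso V (jv V J j) (jv V J k) _ (jv V J y) (sym _ _) (sym _ _));
  apply sym_inv.
Qed.

Lemma lfun_ex (V : SMCC) (J : Arities V) (T : Theory V J) : exists L, is_lfun V J T L.
Proof.
  assert (H : forall j k k', is_iso (cotmap V (tdata V J T) (jv V J j) (jt V J j k) (jt V J j k') k' (lcounit V J T j k'))).
  { intros j k k'. apply (tau_cotensors V J T j (jt V J j k') k' (Coev V J j k') (coev_cot V J j k')). }
  exists (fun j k k' => comp (proj1_sig (constructive_indefinite_description _ (H j k k')))
     (curry (comp (tcomp V J T (jt V J j k) k k') (tensm (idm _) (lcounit V J T j k))))).
  intros j k k'. destruct (constructive_indefinite_description _ (H j k k')) as [g [H1 H2]].
  cbn [proj1_sig]. etransitivity; [apply cA|].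
  etransitivity; [apply (f_equal (fun z => comp z _)); exact H2|]. apply comp_id_l.
Qed.

Lemma rfun_ex (V : SMCC) (J : Arities V) (T : Theory V J) : exists R, is_rfun V J T R.
Proof.
  assert (H : forall j k k', is_iso (cotmap V (tdata V J T) (jv V J j) (jt V J k j) (jt V J k' j) k' (rcounit V J T j k'))).
  { intros j k k'. apply (tau_cotensors V J T j (jt V J k' j) k' (Coev' V J j k') (coev'_cot V J j k')). }
  exists (fun j k k' => comp (proj1_sig (constructive_indefinite_description _ (H j k k')))
     (curry (comp (tcomp V J T (jt V J k j) k k') (tensm (idm _) (rcounit V J T j k))))).
  intros j k k'. destruct (constructive_indefinite_description _ (H j k k')) as [g [H1 H2]].
  cbn [proj1_sig]. etransitivity; [apply cA|].
  etransitivity; [apply (f_equal (fun z => comp z _)); exact H2|]. apply comp_id_l.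
Qed.

Lemma lc_nat (V : SMCC) (J : Arities V) (T U : Theory V J) (A : TheoryMor V J T U) j k :
  comp (tm A (jt V J j k) k) (lcounit V J T j k) = lcounit V J U j k.
Proof. unfold lcounit. rewrite cA, tm_tau. reflexivity. Qed.

Lemma rc_nat (V : SMCC) (J : Arities V) (T U : Theory V J) (A : TheoryMor V J T U) j k :
  comp (tm A (jt V J k j) k) (rcounit V J T j k) = rcounit V J U j k.
Proof. unfold rcounit. rewrite cA, tm_tau. reflexivity. Qed.

Lemma lfun_nat (V : SMCC) (J : Arities V) (T U : Theory V J) (A : TheoryMor V J T U) L' L :
  is_lfun V J T L' -> is_lfun V J U L -> forall j k k',
  comp (tm A (jt V J j k) (jt V J j k')) (L' j k k') = comp (L j k k') (tm A k k').
Proof.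
  intros HT HU j k k'.
  apply (fun_nat V J T U A (jv V J j) _ _ _ _ (lcounit V J T j k') (lcounit V J T j k)).
  - rewrite lc_nat. apply (tau_cotensors V J U j (jt V J j k') k' (Coev V J j k') (coev_cot V J j k')).
  - apply HT.
  - rewrite !lc_nat. apply HU.
Qed.

Lemma rfun_nat (V : SMCC) (J : Arities V) (T U : Theory V J) (A : TheoryMor V J T U) R' R :
  is_rfun V J T R' -> is_rfun V J U R -> forall j k k',
  comp (tm A (jt V J k j) (jt V J k' j)) (R' j k k') = comp (R j k k') (tm A k k').
Proof.
  intros HT HU j k k'.
  apply (fun_nat V J T U A (jv V J j) _ _ _ _ (rcounit V J T j k') (rcounit V J T j k)).
  - rewrite rc_nat. apply (tau_cotensors V J U j (jt V J k' j) k' (Coev' V J j k') (coev'_cot V J j k')).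
  - apply HT.
  - rewrite !rc_nat. apply HU.
Qed.

Lemma kron_nat (V : SMCC) (J : Arities V) (T U : Theory V J) (A : TheoryMor V J T U) L' R' L R :
  is_lfun V J T L' -> is_rfun V J T R' -> is_lfun V J U L -> is_rfun V J U R ->
  forall j j' k k',
  comp (tm A (jt V J j k) (jt V J j' k')) (kron V J T L' R' j j' k k')
  = comp (kron V J U L R j j' k k') (tensm (tm A j j') (tm A k k')).
Proof.
  intros HL' HR' HL HR j j' k k'. unfold kron.
  rewrite cA, Afun, <- !cA. f_equal.
  rewrite cA, <- sym_nat, <- !cA. f_equal. rewrite !tC.
  rewrite (lfun_nat V J T U A L' L HL' HL), (rfun_nat V J T U A R' R HR' HR). reflexivity.
Qed.

Lemma kront_nat (V : SMCC) (J : Arities V) (T U : Theory V J) (A : TheoryMor V J T U) L' R' L R :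
  is_lfun V J T L' -> is_rfun V J T R' -> is_lfun V J U L -> is_rfun V J U R ->
  forall j j' k k',
  comp (tm A (jt V J j k) (jt V J j' k')) (kront V J T L' R' j j' k k')
  = comp (kront V J U L R j j' k k') (tensm (tm A j j') (tm A k k')).
Proof.
  intros HL' HR' HL HR j j' k k'. unfold kront.
  rewrite cA, Afun, <- !cA. f_equal. rewrite !tC.
  rewrite (lfun_nat V J T U A L' L HL' HL), (rfun_nat V J T U A R' R HR' HR). reflexivity.
Qed.

Theorem proposition5p15 (V : SMCC) (J : Arities V)
    (TP TQ TT TU : Theory V J)
    (P : TheoryMor V J TP TT) (Q : TheoryMor V J TQ TT)
    (A : TheoryMor V J TT TU) :
  (commute P Q -> commute_fam (mor_comp_fam A P) (mor_comp_fam A Q)) /\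
  (subtheory_embedding A ->
   commute_fam (mor_comp_fam A P) (mor_comp_fam A Q) -> commute P Q).
Proof.
  split.
  - intros HPQ L R HL HR j j' k k'.
    destruct (lfun_ex V J TT) as [L' HL']. destruct (rfun_ex V J TT) as [R' HR'].
    unfold mor_comp_fam. rewrite <- !tC, !cA.
    rewrite <- (kron_nat V J TT TU A L' R' L R HL' HR' HL HR).
    rewrite <- (kront_nat V J TT TU A L' R' L R HL' HR' HL HR).
    rewrite <- !cA. f_equal. apply HPQ; assumption.
  - intros Hm HAPQ L' R' HL' HR' j j' k k'.
    destruct (lfun_ex V J TU) as [L HL]. destruct (rfun_ex V J TU) as [R HR].
    apply Hm. rewrite !cA.
    rewrite (kron_nat V J TT TU A L' R' L R HL' HR' HL HR).
    rewrite (kront_nat V J TT TU A L' R' L R HL' HR' HL HR).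
    rewrite <- !cA, !tC. apply HAPQ; assumption.
Qed.
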